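(* Let $c\in(0,1]$, and let $(x,y)$ with $x\in[0,1]^E$, $y\in[0,1]^n$ satisfy $x_e\le\min\{1,\sum_{i:e\in S_i}y_i\}$ for all $e\in E$ and $\sum_{i=1}^n y_i\le cn$ (e.g. an optimal solution of the LP below). Then there exists $\alpha\in[0,1]$ depending only on $c$ such that, setting $z_i=\alpha c+(1-\alpha)y_i$ for $i\in[n]$, we have $z\in[0,1]^n$, $\sum_i z_i\le cn$, and $$F(z)\ \ge\ \rho(c)\sum_{e\in E}w_e x_e .$$ In fact, for every $e\in E$, $1-\prod_{i:e\in S_i}(1-z_i)\ge\rho(c)\,x_e$.
   Context: An MC instance: elements $E$ with weights $w\colon E\to\mathbb{R}_{\ge0}$, sets $S_1,\dots,S_n\subseteq E$, $k=cn$. The LP is $\max\{\sum_e w_ex_e : x_e\le\min\{1,\sum_{i:e\in S_i}y_i\}\ \forall e,\ \sum_i y_i\le cn,\ y_i\ge0\}$. The coverage function is $f(T)=\sum_{e\in\bigcup_{i\in T}S_i}w_e$ for $T\subseteq[n]$, and its multilinear extension is $F(z)=\sum_{T\subseteq[n]}f(T)\prod_{i\in T}z_i\prod_{i\notin T}(1-z_i)$ for $z\in[0,1]^n$ (the expected value of $f$ on a random set containing each $i$ independently with probability $z_i$). Definition of $\rho(c)$: for $\alpha\in[0,1]$ and integer $m\ge1$ let $\sigma(\alpha,m)=\bigl(1-\alpha c-(1-\alpha)/m\bigr)^m$. If $c=1/s$ for some integer $s\ge1$, then $\rho(c)=1-(1-c)^{1/c}$. Otherwise $1/(s+1)<c<1/s$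 for a unique integer $s\ge1$, there is a unique $\alpha^*\in(0,1)$ with $\sigma(\alpha^*,s)=\sigma(\alpha^*,s+1)$, and $\rho(c)=1-\sigma(\alpha^*,s)$. *)

(* Defs.v *)
From HB Require Import structures.
From mathcomp Require Import all_boot all_order all_algebra.
From mathcomp Require Import boolp classical_sets reals.
Set Implicit Arguments. Unset Strict Implicit. Unset Printing Implicit Defensive.
Import Order.TTheory GRing.Theory Num.Theory.
Local Open Scope ring_scope.

Definition sigma {R : realType} (c alpha : R) (m : nat) : R :=
  (1 - alpha * c - (1 - alpha) / m%:R) ^+ m.

(* The defining property of rho(c), as in the paper:
   - if c = 1/s (s >= 1 integer), rho(c) = 1 - (1-c)^(1/c) = 1 - (1-c)^s;
   - if 1/(s+1) < c < 1/s (s >= 1), rho(c) = 1 - sigma(alpha*, s) where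
     alpha* in (0,1) satisfies sigma(alpha*, s) = sigma(alpha*, s+1). *)
Definition is_rho {R : realType} (c r : R) : Prop :=
  exists s : nat, (1 <= s)%N /\
    ((c = (s%:R)^-1 /\ r = 1 - (1 - c) ^+ s) \/
     ((s.+1%:R)^-1 < c /\ c < (s%:R)^-1 /\
      exists a : R, 0 < a /\ a < 1 /\ sigma c a s = sigma c a s.+1 /\
                    r = 1 - sigma c a s)).

(* rho(c): the (unique, by the paper) value with the defining property. *)
Definition rho {R : realType} (c : R) : R := xget 0 [set r | is_rho c r].

Definition coverage {R : realType} {E : finType} {n : nat}
  (w : E -> R) (S : 'I_n -> {set E}) (T : {set 'I_n}) : R :=
  \sum_(e : E | [exists i in T, e \in S i]) w e.

Definition multilin {R : realType} {E : finType} {n : nat}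
  (w : E -> R) (S : 'I_n -> {set E}) (z : 'I_n -> R) : R :=
  \sum_(T : {set 'I_n}) coverage w S T *
     (\prod_(i in T) z i) * (\prod_(i in ~: T) (1 - z i)).

(* Main.v *)
Require Import Defs.
From HB Require Import structures.
From mathcomp Require Import all_boot all_order all_algebra.
From mathcomp Require Import boolp classical_sets reals exp.
From mathcomp Require Import ring lra zify.
Set Implicit Arguments. Unset Strict Implicit. Unset Printing Implicit Defensive.
Import Order.TTheory GRing.Theory Num.Theory.
Local Open Scope ring_scope.

Lemma amgm2 (R : realFieldType) (A B : R) (j k : nat) : 0 <= A -> 0 <= B ->
  A ^+ j * B ^+ k <= ((j%:R * A + k%:R * B) / (j + k)%:R) ^+ (j + k).
Proof.
move=> A0 B0.
pose E := fun i : ('I_j + 'I_k)%type => match i with inl _ => A | inr _ => B end.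
have H : {in predT, forall i, 0 <= E i} by move=> [] i.
have := (leif_AGM H).1.
rewrite !big_sumType /=.
have -> : #|predT : {pred ('I_j + 'I_k)}| = (j + k)%N by rewrite card_sum !card_ord.
have pA : forall (m : nat) (P : pred 'I_m) (X : R), P =1 xpredT -> \prod_(i < m | P i) X = X ^+ m.
  by move=> m P X hP; rewrite (eq_bigl _ _ hP) -(big_mkord xpredT (fun _ => X)) prodr_const_nat subn0.
have sA : forall (m : nat) (P : pred 'I_m) (X : R), P =1 xpredT -> \sum_(i < m | P i) X = m%:R * X.
  by move=> m P X hP; rewrite (eq_bigl _ _ hP) -(big_mkord xpredT (fun _ => X)) sumr_const_nat subn0 mulr_natl.
by rewrite !pA ?sA.
Qed.

Lemma powconv (R : realFieldType) (A B x : R) (d : nat) : 0 <= A -> 0 <= B -> 0 <= x -> x <= 1 ->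
  (x * A + (1 - x) * B) ^+ d <= x * A ^+ d + (1 - x) * B ^+ d.
Proof.
move=> A0 B0 x0 x1; elim: d => [|d IH]; first by rewrite !expr0; lra.
have M0 : 0 <= x * A + (1 - x) * B by nra.
have hAB : 0 <= (A - B) * (A ^+ d - B ^+ d).
  have [AB|BA] := lerP A B.
    have : A ^+ d <= B ^+ d by rewrite lerXn2r.
    nra.
  have : B ^+ d <= A ^+ d by rewrite lerXn2r // ltW.
  nra.
rewrite exprS (exprS A) (exprS B).
apply: (le_trans (ler_wpM2l M0 IH)).
have ad : 0 <= A ^+ d by exact: exprn_ge0.
rewrite -subr_ge0.
have -> : x * (A * A ^+ d) + (1 - x) * (B * B ^+ d) -
   (x * A + (1 - x) * B) * (x * A ^+ d + (1 - x) * B ^+ d) = x * (1 - x) * ((A - B) * (A ^+ d - B ^+ d)) by ring.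
apply: mulr_ge0 => //; apply: mulr_ge0 => //; lra.
Qed.

Lemma logdesc (R : realFieldType) (f : nat -> R) (s : nat) :
  (forall p, 0 <= f p.+1) -> (forall p, 0 < f p.+2) ->
  (forall p, f p.+1 * f p.+3 <= f p.+2 ^+ 2) ->
  (1 <= s)%N -> f s = f s.+1 -> forall m, (1 <= m)%N -> f m <= f s.
Proof.
move=> f0 fp lc s1 fs m m1.
have lc' : forall m, (2 <= m)%N -> f m.-1 * f m.+1 <= f m ^+ 2.
  by case=> [|[|p]] // _; exact: lc.
have fp' : forall m, (2 <= m)%N -> 0 < f m by case=> [|[|p]] // _; exact: fp.
have f0' : forall m, (1 <= m)%N -> 0 <= f m by case=> [|p] // _; exact: f0.
have up : forall k, f (s + k)%N.+1 <= f (s + k)%N /\ f (s + k)%N <= f s.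
  elim=> [|k [IH1 IH2]];  first by rewrite addn0 -fs; split; exact: lexx.
  have lck := lc' (s + k)%N.+1 ltac:(lia).
  have fpos := fp' (s + k)%N.+1 ltac:(lia).
  rewrite /= in lck.
  rewrite addnS.
  have h1 : f (s + k)%N.+1 * f (s + k)%N.+2 <= f (s + k)%N.+1 * f (s + k)%N.+1.
    apply: le_trans (_ : f (s + k)%N * f (s + k)%N.+2 <= _); last by rewrite -expr2.
    apply: ler_wpM2r => //; apply: f0'; lia.
  split; first by rewrite -(ler_pM2l fpos).
  exact: le_trans IH2.
have down : forall k m, (m + k)%N = s -> (1 <= m)%N -> f m <= f m.+1 /\ f m <= f s.
  elim=> [|k IH] m' hm hm1.
    by rewrite addn0 in hm; rewrite hm -fs; split; exact: lexx.
  have [IH1 IH2] := IH m'.+1 ltac:(lia) ltac:(lia).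
  have fpos := fp' m'.+1 ltac:(lia).
  have lck := lc' m'.+1 ltac:(lia); rewrite /= in lck.
  have h : f m' * f m'.+1 <= f m'.+1 * f m'.+1.
    apply: le_trans (_ : f m' * f m'.+2 <= _); last by rewrite -expr2.
    by apply: ler_wpM2l => //; apply: f0'.
  have hh : f m' <= f m'.+1 by rewrite -(ler_pM2r fpos).
  split => //; exact: le_trans IH2.
have [ms|sm] := leqP m s.
  by have [] := down (s - m)%N m ltac:(lia) m1.
by have [] := up (m - s)%N; have -> : (s + (m - s))%N = m by lia.
Qed.

Definition base (R : realType) (c a : R) (m : nat) : R := 1 - a * c - (1 - a) / m%:R.

Lemma base_ge0 (R : realType) (c a : R) m : 0 < c -> c <= 1 -> 0 <= a -> a <= 1 ->
  (1 <= m)%N -> 0 <= base c a m.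
Proof.
move=> c0 c1 a0 a1 m1; rewrite /base.
have mp : 1 <= m%:R :> R by rewrite ler1n.
have : (1 - a) / m%:R <= 1 - a.
  rewrite ler_pdivrMr; last exact: (lt_le_trans ltr01 mp).
  have : 0 <= (1 - a) * (m%:R - 1) by apply: mulr_ge0; lra.
  nra.
have : 0 <= a * (1 - c) by apply: mulr_ge0; lra.
nra.
Qed.

Lemma base_le1 (R : realType) (c a : R) m : 0 < c -> c <= 1 -> 0 <= a -> a <= 1 ->
  base c a m <= 1.
Proof.
move=> c0 c1 a0 a1; rewrite /base.
have : 0 <= (1 - a) / m%:R by apply: divr_ge0; [lra | exact: ler0n].
have : 0 <= a * c by apply: mulr_ge0; lra.
lra.
Qed.

Lemma base_gt0 (R : realType) (c a : R) m : 0 < c -> c < 1 -> 0 <= a -> a <= 1 ->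
  (2 <= m)%N -> 0 < base c a m.
Proof.
move=> c0 c1' a0 a1 m2; rewrite /base.
have mp : 2 <= m%:R :> R by rewrite (ler_nat R 2 m).
have : (1 - a) / m%:R <= (1 - a) / 2.
  apply: ler_wpM2l; first lra.
  by rewrite lef_pV2 ?posrE //; apply: lt_le_trans mp.
have : 0 < (1 - a) / 2 + a * (1 - c).
  have [a1'|a1'] := ltrP a 1.
    have : 0 < (1 - a) / 2 by apply: divr_gt0; lra.
    have : 0 <= a * (1 - c) by apply: mulr_ge0; lra.
    lra.
  have -> : a = 1 by lra.
  lra.
nra.
Qed.

Lemma sigma_lc (R : realType) (c a : R) p : 0 < c -> c <= 1 -> 0 <= a -> a <= 1 ->
  sigma c a p.+1 * sigma c a p.+3 <= sigma c a p.+2 ^+ 2.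
Proof.
move=> c0 c1 a0 a1.
have := @amgm2 R _ _ p.+1 p.+3 (base_ge0 (m := p.+1) c0 c1 a0 a1 isT) (base_ge0 (m := p.+3) c0 c1 a0 a1 isT).
have -> : ((p.+1)%:R * base c a p.+1 + (p.+3)%:R * base c a p.+3) / (p.+1 + p.+3)%:R = base c a p.+2.
  rewrite /base -[p.+3]addn3 -[p.+2]addn2 -[p.+1]addn1 !natrD.
  have P0 : 0 <= p%:R :> R := ler0n _ _.
  field; rewrite ?lt0r_neq0 //; lra.
have e : (p.+1 + p.+3 = p.+2 * 2)%N by lia.
rewrite e exprM => h; exact: h.
Qed.


Lemma branch1 (R : realType) (c : R) (s : nat) : (2 <= s)%N -> c = (s%:R)^-1 ->
  exists a, [/\ 0 <= a, a <= 1, sigma c a s = (1 - c) ^+ s & sigma c a s.+1 = (1 - c) ^+ s].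
Proof.
move=> s2 cE.
set S : R := s%:R.
have S2 : 2 <= S by rewrite /S (ler_nat R 2 s).
have Sn0 : S != 0 by apply: lt0r_neq0; lra.
have S1n0 : S + 1 != 0 by apply: lt0r_neq0; lra.
have cS : c * S = 1 by rewrite cE mulVf.
have c0 : 0 < c by rewrite cE invr_gt0; lra.
have c1 : 0 <= 1 - c by nra.
pose t := (1 - c) `^ (S / (S + 1)).
have t0 : 0 <= t := powR_ge0 _ _.
have eS1 : (s.+1)%:R = S + 1 :> R by rewrite -addn1 natrD.
have tp : t ^+ s.+1 = (1 - c) ^+ s.
  rewrite -(powR_mulrn _ t0) eS1 -powRrM.
  rewrite (_ : S / (S + 1) * (S + 1) = S); last by field.
  by rewrite powR_mulrn.
have tlo : 1 - c <= t.
  rewrite -(ler_pXn2r (n := s.+1)) // ?nnegrE // tp exprS.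
  apply: ler_piMl; [exact: exprn_ge0 | lra].
have thi : t * (S + 1) <= S.
  rewrite -ler_pdivlMr; last lra.
  rewrite -(ler_pXn2r (n := s.+1)) // ?nnegrE //; last first.
    by apply: divr_ge0; lra.
  rewrite tp.
  have := @amgm2 R (1 - c) 1 s 1 c1 ler01.
  rewrite expr1n mulr1 addn1 eS1 -/S.
  have e : S * (1 - c) + 1 * 1 = S by rewrite mulrBr (mulrC S c) cS; ring.
  by rewrite e.
exists (S ^+ 2 - S * (S + 1) * t); split.
- have : 0 <= S * (S - t * (S + 1)) by apply: mulr_ge0; lra.
  nra.
- have : 0 <= S * (S + 1) * (t - (1 - c)) by apply: mulr_ge0; [apply: mulr_ge0|]; lra.
  have : S * (S + 1) * (1 - c) = S ^+ 2 - 1.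
    rewrite (_ : S * (S + 1) * (1 - c) = (S + 1) * S - (S + 1) * (c * S)); last by ring.
    by rewrite cS; ring.
  nra.
- rewrite /sigma; congr (_ ^+ _); rewrite -/S cE; field.
  all: try exact: Sn0; try exact: S1n0.
- rewrite /sigma -tp eS1; congr (_ ^+ _); rewrite -/S cE; field.
  all: try exact: Sn0; try exact: S1n0.
  all: try by rewrite S1n0 Sn0.
Qed.

Lemma sigma_ge0 (R : realType) (c a : R) m : 0 < c -> c <= 1 -> 0 <= a -> a <= 1 ->
  (1 <= m)%N -> 0 <= sigma c a m.
Proof. by move=> *; apply: exprn_ge0; apply: base_ge0. Qed.

Lemma sigma_desc (R : realType) (c a : R) s : 0 < c -> c < 1 -> 0 <= a -> a <= 1 ->
  (1 <= s)%N -> sigma c a s = sigma c a s.+1 -> forall m, (1 <= m)%N -> sigma c a m <= sigma c a s.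
Proof.
move=> c0 c1 a0 a1 s1 e.
have c1' : c <= 1 by lra.
apply: logdesc => //.
- by move=> p; apply: sigma_ge0.
- by move=> p; apply: exprn_gt0; apply: base_gt0.
- by move=> p; apply: sigma_lc.
Qed.

Lemma key (R : realType) (c : R) : 0 < c -> c <= 1 ->
  exists a : R, 0 <= a <= 1 /\ forall m, (1 <= m)%N -> sigma c a m <= 1 - rho c.
Proof.
move=> c0 c1.
have [[r hr]|nr] := pselect (exists r, is_rho c r); last first.
  have -> : rho c = 0.
    by rewrite /rho xgetPN // => r hr; apply: nr; exists r.
  exists 1; split; first by rewrite lexx ler01.
  move=> m m1; rewrite subr0; apply: exprn_ile1.
    by apply: (base_ge0 (a := 1)) => //; lra.
  by apply: (base_le1 (a := 1)) => //; lra.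
have : is_rho c (rho c) by rewrite /rho; apply: (xgetI _ (x := r)).
move=> [s [s1 [[cs rs]|[cl [cu [a [a0 [a1 [e rs]]]]]]]]].
- have [s1'|s2] := leqP s 1.
    have s1e : s = 1%N by lia.
    move: cs rs; rewrite s1e invr1 => -> ->.
    exists 1; split; first by rewrite lexx ler01.
    move=> m m1; rewrite /sigma subrr expr1 subr0 !mul1r subrr sub0r mul0r oppr0 expr0n.
    by case: m m1.
  have [a [a0 a1 e1 e2]] := branch1 s2 cs.
  exists a; split; first by rewrite a0 a1.
  have cl1 : c < 1.
    rewrite cs invf_lt1; last by rewrite ltr0n; lia.
    by rewrite ltr1n.
  move=> m m1; rewrite rs opprB addrC subrK -e1.
  by apply: sigma_desc => //; rewrite e1 e2.
- exists a; split; first by rewrite !ltW.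
  have cl1 : c < 1.
    apply: (lt_le_trans cu); rewrite invf_le1 ?ler1n // ltr0n; lia.
  move=> m m1; rewrite rs opprB addrC subrK.
  by apply: sigma_desc => //; lra.
Qed.

Lemma elem (R : realType) (c a r : R) (n : nat) (P : pred 'I_n) (y : 'I_n -> R) (xe : R) :
  0 < c -> c <= 1 -> 0 <= a -> a <= 1 ->
  (forall m, (1 <= m)%N -> sigma c a m <= 1 - r) ->
  (forall i, 0 <= y i <= 1) -> 0 <= xe -> xe <= Num.min 1 (\sum_(i | P i) y i) ->
  r * xe <= 1 - \prod_(i | P i) (1 - (a * c + (1 - a) * y i)).
Proof.
move=> c0 c1 a0 a1 hs hy x0 hx.
have xle1 : xe <= 1 by move: hx; rewrite le_min => /andP[].
have xleY : xe <= \sum_(i | P i) y i by move: hx; rewrite le_min => /andP[].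
set d := #|P|.
have [d0|dpos] := posnP d.
  have P0 : P =1 xpred0 by apply: card0_eq.
  move: xleY; rewrite (eq_bigl _ _ P0) big_pred0_eq (eq_bigl _ _ P0) big_pred0_eq => xle0.
  have -> : xe = 0 by lra.
  by rewrite mulr0 subrr.
set u := fun i => 1 - (a * c + (1 - a) * y i).
have u0 : forall i, 0 <= u i.
  move=> i; rewrite /u; have := hy i; move=> /andP[y0 y1].
  have : a * c <= a by rewrite ler_piMr.
  have : (1 - a) * y i <= 1 - a by rewrite ler_piMr //; lra.
  lra.
have agm := (leif_AGM (A := P) (E := u) (in1W u0)).1.
rewrite -/d in agm.
have eprod : \prod_(i | P i) u i = \prod_(i in P) u i by [].
have esum : \sum_(i in P) u i = d%:R * (1 - a * c) - (1 - a) * \sum_(i in P) y i.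
  rewrite /u sumrB big_split /= !sumr_const -/d -mulr_sumr -[a * c *+ d]mulr_natl; ring.
set Y := \sum_(i in P) y i.
have dR : 0 < d%:R :> R by rewrite ltr0n.
have mean0 : 0 <= (\sum_(i in P) u i) / d%:R.
  by apply: divr_ge0; [apply: sumr_ge0 => i _; exact: u0 | exact: ltW].
have xleY' : xe <= Y by [].
have meanle : (\sum_(i in P) u i) / d%:R <= xe * base c a d + (1 - xe) * (1 - a * c).
  rewrite -subr_ge0.
  have -> : xe * base c a d + (1 - xe) * (1 - a * c) - (\sum_(i in P) u i) / d%:R
     = (1 - a) * (Y - xe) / d%:R.
    rewrite esum -/Y /base; field; exact: lt0r_neq0.
  by apply: divr_ge0; [apply: mulr_ge0; lra | exact: ltW].
have base0 : 0 <= base c a d by apply: base_ge0 => //.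
have q0 : 0 <= 1 - a * c.
  have : a * c <= a by rewrite ler_piMr.
  lra.
have q1 : (1 - a * c) ^+ d <= 1.
  apply: exprn_ile1 => //; have : 0 <= a * c by apply: mulr_ge0; lra.
  lra.
have h1 := le_trans (leif_AGM (A := P) (E := u) (in1W u0)).1 (lerXn2r d mean0 (le_trans mean0 meanle) meanle).
have h2 := powconv d base0 q0 x0 xle1.
have h3 : base c a d ^+ d <= 1 - r := hs d dpos.
have h4 : \prod_(i in P) u i <= xe * (1 - r) + (1 - xe).
  apply: le_trans h1 (le_trans h2 _).
  have : 0 <= 1 - xe by lra.
  nra.
rewrite -/u eprod.
nra.
Qed.

Lemma prodsplit (R : realType) (n : nat) (a b : 'I_n -> R) :
  \prod_i (a i + b i) = \sum_(T : {set 'I_n}) (\prod_(i in T) a i) * (\prod_(i in ~: T) b i).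
Proof.
rewrite bigA_distr; apply: eq_bigr => T _.
rewrite (bigID (fun i => i \in T)) /=; congr (_ * _).
  by apply: eq_bigr => i ->.
apply: eq_big => i; first by rewrite !inE.
by move/negbTE ->.
Qed.

Lemma multilinE (R : realType) (E : finType) (w : E -> R) (n : nat) (S : 'I_n -> {set E})
  (z : 'I_n -> R) :
  multilin w S z = \sum_e w e * (1 - \prod_(i | e \in S i) (1 - z i)).
Proof.
pose PT (T : {set 'I_n}) := (\prod_(i in T) z i) * (\prod_(i in ~: T) (1 - z i)).
have tot : \sum_(T : {set 'I_n}) PT T = 1.
  rewrite /PT -prodsplit; apply: big1 => i _; ring.
have cnd : forall e : E, \sum_(T : {set 'I_n}) (if [exists i in T, e \in S i] then 0 else PT T)
   = \prod_(i | e \in S i) (1 - z i).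
  move=> e.
  have := prodsplit (fun i => if e \in S i then 0 else z i) (fun i => 1 - z i).
  have -> : \prod_i ((if e \in S i then 0 else z i) + (1 - z i)) = \prod_(i | e \in S i) (1 - z i).
    rewrite (bigID (fun i => e \in S i)) /= [X in _ * X]big1 ?mulr1.
      by apply: eq_bigr => i ->; rewrite add0r.
    by move=> i /negbTE ->; ring.
  move=> ->; apply: eq_bigr => T _.
  case: ifP => [/existsP [i /andP [iT eS]]|nex].
    by rewrite (bigD1 i) //= eS mul0r mul0r.
  rewrite /PT; congr (_ * _); apply: eq_bigr => i iT.
  case: ifP => // eS; move: nex; rewrite (_ : [exists i in T, e \in S i] = true) //.
  by apply/existsP; exists i; rewrite iT eS.
rewrite /multilin /coverage.
under eq_bigr => T _ do rewrite -mulrA mulr_suml big_mkcond.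
rewrite exchange_big /=; apply: eq_bigr => e _.
rewrite -(cnd e).
have h : 1 - \sum_(T : {set 'I_n}) (if [exists i in T, e \in S i] then 0 else PT T)
  = \sum_(T : {set 'I_n}) (PT T - (if [exists i in T, e \in S i] then 0 else PT T)).
  by rewrite sumrB tot.
rewrite h mulr_sumr; apply: eq_bigr => T _.
by case: ifP => _; rewrite ?subr0 ?subrr ?mulr0.
Qed.

Unset Implicit Arguments.

Theorem lemma3p1 (R : realType) (c : R) (hc0 : 0 < c) (hc1 : c <= 1) :
  exists alpha : R, 0 <= alpha <= 1 /\
  forall (E : finType) (w : E -> R) (n : nat) (S : 'I_n -> {set E})
         (x : E -> R) (y : 'I_n -> R),
    (forall e, 0 <= w e) ->
    (forall e, 0 <= x e <= 1) ->
    (forall i, 0 <= y i <= 1) ->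
    (forall e, x e <= Num.min 1 (\sum_(i | e \in S i) y i)) ->
    \sum_i y i <= c * n%:R ->
    let z := fun i : 'I_n => alpha * c + (1 - alpha) * y i in
    [/\ (forall i, 0 <= z i <= 1),
        \sum_i z i <= c * n%:R,
        rho c * (\sum_e w e * x e) <= multilin w S z &
        (forall e, rho c * x e <= 1 - \prod_(i | e \in S i) (1 - z i))].
Proof.
have [a [/andP [a0 a1] ha]] := key hc0 hc1.
exists a; split; first by rewrite a0 a1.
move=> E w n S x y hw hx hy hxs hsum z.
have hel : forall e, rho c * x e <= 1 - \prod_(i | e \in S i) (1 - z i).
  move=> e; have /andP [xe0 xe1] := hx e.
  exact: (elem (P := fun i => e \in S i) hc0 hc1 a0 a1 ha hy xe0 (hxs e)).
split => //.
- move=> i; rewrite /z; have /andP [y0 y1] := hy i.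
  have h1 : 0 <= a * c by apply: mulr_ge0; lra.
  have h2 : 0 <= (1 - a) * y i by apply: mulr_ge0; lra.
  have h3 : a * c <= a by rewrite ler_piMr.
  have h4 : (1 - a) * y i <= 1 - a by rewrite ler_piMr //; lra.
  apply/andP; split; lra.
- rewrite /z big_split /= sumr_const card_ord -mulr_sumr -mulr_natr.
  have : (1 - a) * \sum_i y i <= (1 - a) * (c * n%:R) by apply: ler_wpM2l => //; lra.
  lra.
- rewrite multilinE mulr_sumr; apply: ler_sum => e _.
  rewrite mulrCA; apply: ler_wpM2l => //.
Qed.
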